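(* Let $N\ge1$ and consider pairs $(b,c)\in\mathbb{Z}_{\ge0}^2$ with $b+c\le 2N$. Call $(b',c')\in\mathbb{Z}_{\ge0}^2$ with $b'+c'\le2N$ a neighbor of $(b,c)$, $(b',c')\ne(b,c)$, if either $(b-b')(c-c')\ge0$ and $|b-b'|+|c-c'|\le2$, or $(b-b')(c-c')<0$ and $\max\{|b-b'|,|c-c'|\}\le2$. Define $\chi^2_{TDT}(b,c)=\frac{(b-c)^2}{b+c}$ for $b+c>0$ and $\chi^2_{TDT}(0,0)=0$, and $LS((b,c))=\max_{(b',c')\text{ neighbor of }(b,c)}|\chi^2_{TDT}(b,c)-\chi^2_{TDT}(b',c')|$. Then $LS((b,c))>6$ whenever $$0\le c<\tfrac{b-8}{7}\ \ \lor\ \ 2\le b<\tfrac{c+8}{7}\ \ \lor\ \ 0\le b<\tfrac{c-8}{7}\ \ \lor\ \ 2\le c<\tfrac{b+8}{7}.$$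
   Context: Here $b$ and $c$ are the off-diagonal counts of the $2\times2$ transmission-disequilibrium-test table classifying $2N$ parents of $N$ families (transmitted allele $A_1$/non-transmitted $A_2$ count $b$, transmitted $A_2$/non-transmitted $A_1$ count $c$); neighboring datasets differ in one family, which corresponds to the neighbor relation on $(b,c)$ given in the claim. *)

(* Defs.v *)
From HB Require Import structures.
From mathcomp Require Import all_boot all_order all_algebra.
Set Implicit Arguments. Unset Strict Implicit. Unset Printing Implicit Defensive.
Import Order.TTheory GRing.Theory Num.Theory.
Local Open Scope ring_scope.

Definition chi2 (R : realFieldType) (b c : nat) : R :=
  if (b + c == 0)%N then 0
  else ((b%:R - c%:R) ^+ 2) / (b + c)%:R.

(* (b',c') is a neighbor of (b,c) (the constraint b'+c' <= 2N is imposed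
   separately in LS). *)
Definition is_neighbor (b c b' c' : nat) : bool :=
  let db : int := b%:Z - b'%:Z in
  let dc : int := c%:Z - c'%:Z in
  ((b', c') != (b, c)) &&
  (if 0 <= db * dc then `|db| + `|dc| <= 2
   else Num.max `|db| `|dc| <= 2).

(* LS((b,c)) = max over neighbors (b',c') with b'+c' <= 2N of
   |chi2(b,c) - chi2(b',c')|.  Such b',c' lie in [0,2N], so ranging over
   'I_(2N+1) x 'I_(2N+1) covers all candidates. *)
Definition LS (R : realFieldType) (N b c : nat) : R :=
  \big[Num.max/0]_(p : 'I_(2 * N).+1 * 'I_(2 * N).+1
                   | ((p.1 + p.2 <= 2 * N)%N && is_neighbor b c p.1 p.2))
     `|chi2 R b c - chi2 R p.1 p.2|.

(* Main.v *)
Require Import Defs.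
From HB Require Import structures.
From mathcomp Require Import all_boot all_order all_algebra zify ring lra.
Import Order.TTheory GRing.Theory Num.Theory.
Local Open Scope ring_scope.
Lemma nb1 x y : is_neighbor (x+2) y x (y+2).
Proof.
rewrite /is_neighbor xpair_eqE.
have -> : (x == x + 2)%N = false by lia.
have -> : ((x+2)%N%:Z - x%:Z) = 2 by rewrite PoszD; ring.
have -> : (y%:Z - (y+2)%N%:Z) = -2 by rewrite PoszD; ring.
by [].
Qed.
Lemma nb2 x y : is_neighbor x (y+2) (x+2) y.
Proof.
rewrite /is_neighbor xpair_eqE.
have -> : (x+2 == x)%N = false by lia.
have -> : (x%:Z - (x+2)%N%:Z) = -2 by rewrite PoszD; ring.
have -> : ((y+2)%N%:Z - y%:Z) = 2 by rewrite PoszD; ring.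
by [].
Qed.
Lemma LSge (R : realFieldType) N b c b' c' : (b' + c' <= 2 * N)%N ->
  is_neighbor b c b' c' -> 6 < `|chi2 R b c - chi2 R b' c'| -> 6 < LS R N b c.
Proof.
move=> hs hn h6.
have hb : (b' < (2*N).+1)%N by lia.
have hc : (c' < (2*N).+1)%N by lia.
rewrite /LS (bigD1 (Ordinal hb, Ordinal hc)) /=; last by rewrite hs hn.
by rewrite lt_max h6.
Qed.
Lemma chi2E (R : realFieldType) x y :
  chi2 R (x+2) y = ((x%:R + 2 - y%:R) ^+ 2) / (x%:R + y%:R + 2).
Proof.
rewrite /chi2. have -> : (x + 2 + y == 0)%N = false by lia.
by rewrite !natrD; congr (_ ^+ 2 / _); ring.
Qed.
Lemma chi2E' (R : realFieldType) x y :
  chi2 R x (y+2) = ((x%:R - y%:R - 2) ^+ 2) / (x%:R + y%:R + 2).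
Proof.
rewrite /chi2. have -> : (x + (y+2) == 0)%N = false by lia.
by rewrite !natrD; congr (_ ^+ 2 / _); ring.
Qed.
Lemma key (R : realFieldType) (A B s : R) : 0 < s -> 6 * s < A - B -> 6 < `|A / s - B / s|.
Proof.
move=> hs h; apply: (lt_le_trans _ (ler_norm _)); rewrite -mulrBl ltr_pdivlMr // mulrC.
Qed.
Theorem lemma2 (R : realFieldType) (N b c : nat) :
  (1 <= N)%N -> (b + c <= 2 * N)%N ->
  ( (c%:R < (b%:R - 8) / 7 :> R))
  \/ ((2 <= b)%N /\ (b%:R < (c%:R + 8) / 7 :> R))
  \/ ((b%:R < (c%:R - 8) / 7 :> R))
  \/ ((2 <= c)%N /\ (c%:R < (b%:R + 8) / 7 :> R)) ->
  6 < LS R N b c.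
Proof.
move=> hN hs [h|[[hb h]|[h|[hc h]]]].
- have hb : (2 <= b)%N.
    case: b hs h => [|[|b]] //= _ h; rewrite ?natr1 in h; exfalso;
    have := ler0n R c; lra.
  have [x ex] : exists x, b = (x + 2)%N by exists (b - 2)%N; lia.
  subst b.
  apply: (@LSge R N _ _ x (c+2)%N); first by lia.
    exact: nb1.
  rewrite chi2E chi2E'; rewrite natrD in h.
  have hx := ler0n R x; have hy := ler0n R c.
  apply: key; nra.
- have [x ex] : exists x, b = (x + 2)%N by exists (b - 2)%N; lia.
  subst b.
  apply: (@LSge R N _ _ x (c+2)%N); first by lia.
    exact: nb1.
  rewrite chi2E chi2E' -normrN opprB; rewrite natrD in h.
  have hx := ler0n R x; have hy := ler0n R c.
  apply: key; nra.
- have hc : (2 <= c)%N.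
    case: c hs h => [|[|c]] //= _ h; rewrite ?natr1 in h; exfalso;
    have := ler0n R b; lra.
  have [y ey] : exists y, c = (y + 2)%N by exists (c - 2)%N; lia.
  subst c.
  apply: (@LSge R N _ _ (b+2)%N y); first by lia.
    exact: nb2.
  rewrite chi2E chi2E'; rewrite natrD in h.
  have hx := ler0n R b; have hy := ler0n R y.
  apply: key; nra.
- have [y ey] : exists y, c = (y + 2)%N by exists (c - 2)%N; lia.
  subst c.
  apply: (@LSge R N _ _ (b+2)%N y); first by lia.
    exact: nb2.
  rewrite chi2E chi2E'; rewrite natrD in h.
  rewrite -normrN opprB.
  have hx := ler0n R b; have hy := ler0n R y.
  apply: key; nra.
Qed.
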